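(* In the setting below, let $y^\star,y'\in\mathcal{Y}$ be distinct with $p_{\mathrm{ref}}(y^\star)>0$ and $p_{\mathrm{ref}}(y')>0$. Then: (i) if $\alpha_{\mathrm{KL}}>0$, the point mass $\delta_{y^\star}$ is not a stationary point of $\mathcal{J}$ on $\mathcal{F}$; (ii) if $\alpha_{\mathrm{KL}}=0$ and $$r(y^\star)-r(y')<\alpha_{\mathrm{div}}\big(1-c(y^\star,y')\big),$$ then $\delta_{y^\star}$ is not a local maximizer of $\mathcal{J}$ on $\mathcal{F}$.
   Context: Let $\mathcal{Y}$ be a finite set of sequences, $p_{\mathrm{ref}}$ a probability distribution on $\mathcal{Y}$, $r:\mathcal{Y}\to\mathbb{R}$ a reward, $\psi:\mathcal{Y}\to\mathbb{S}^{d-1}$ a unit-norm embedding, $c(y,y')=\langle\psi(y),\psi(y')\rangle$ (cosine similarity), and $\alpha_{\mathrm{KL}}\ge0$, $\alpha_{\mathrm{div}}\ge 0$. The feasible set is $\mathcal{F}=\{p\in\Delta(\mathcal{Y}): p\ll p_{\mathrm{ref}}\}$ and the objective is $$\mathcal{J}[p]=\mathbb{E}_{y\sim p}[r(y)]-\alpha_{\mathrm{KL}}\,\mathrm{KL}(p\,\|\,p_{\mathrm{ref}})-\frac{\alpha_{\mathrm{div}}}{2}\,\mathbb{E}_{(y,y')\sim p\otimes p}[c(y,y')],$$ with $\mathrm{KL}(p\|q)=\sum_y p(y)\log\frac{p(y)}{q(y)}$ and pair expectations over two independent draws from $p$. $\delta_y$ denotes the point mass at $y$. *)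

(* Defs.v *)
From mathcomp Require Import all_boot all_order all_algebra.
From mathcomp Require Import all_classical all_reals all_analysis.
Set Implicit Arguments. Unset Strict Implicit. Unset Printing Implicit Defensive.
Import Order.TTheory GRing.Theory Num.Theory.
Local Open Scope ring_scope.

Section Defs.
Variables (R : realType) (Y : finType).

Definition is_distr (p : Y -> R) : Prop :=
  (forall y, 0 <= p y) /\ \sum_(y : Y) p y = 1.

Definition feasible (pref p : Y -> R) : Prop :=
  is_distr p /\ (forall y, pref y = 0 -> p y = 0).

Definition KL (p q : Y -> R) : R :=
  \sum_(y : Y) (if p y == 0 then 0 else p y * ln (p y / q y)).

Definition cossim (d : nat) (psi : Y -> 'I_d -> R) (y y' : Y) : R :=
  \sum_(i < d) psi y i * psi y' i.

Definition unit_norm (d : nat) (psi : Y -> 'I_d -> R) : Prop :=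
  forall y, \sum_(i < d) psi y i ^+ 2 = 1.

Definition objJ (pref r : Y -> R) (d : nat) (psi : Y -> 'I_d -> R)
  (aKL adiv : R) (p : Y -> R) : R :=
  \sum_(y : Y) p y * r y - aKL * KL p pref
  - adiv / 2 * \sum_(y : Y) \sum_(y' : Y) p y * p y' * cossim psi y y'.

Definition dirac_pt (y0 : Y) : Y -> R := fun y => if y == y0 then 1 else 0.

(* p is a stationary point of J on F: for every feasible q, the one-sided
   directional derivative of J at p in the feasible direction q - p exists
   (as a real number) and is <= 0 (first-order condition for maximization). *)
Definition stationary (J : (Y -> R) -> R) (F : (Y -> R) -> Prop) (p : Y -> R)
  : Prop :=
  F p /\
  forall q, F q -> exists l : R, l <= 0 /\
    forall e : R, 0 < e -> exists del : R, 0 < del /\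
      forall t : R, 0 < t -> t < del ->
        `| (J (fun y => p y + t * (q y - p y)) - J p) / t - l | < e.

(* p is a local maximizer of J on F (sup-norm neighbourhoods; all norms on
   R^Y are equivalent) *)
Definition local_max (J : (Y -> R) -> R) (F : (Y -> R) -> Prop) (p : Y -> R)
  : Prop :=
  F p /\ exists eps : R, 0 < eps /\
    forall q, F q -> (forall y, `| q y - p y | < eps) -> J q <= J p.

End Defs.

(* Main.v *)
Require Import Defs.
From mathcomp Require Import all_boot all_order all_algebra.
From mathcomp Require Import all_classical all_reals all_analysis.
From mathcomp Require Import ring lra.
Import Order.TTheory GRing.Theory Num.Theory.
Set Implicit Arguments. Unset Strict Implicit.
Local Open Scope ring_scope.

Lemma sum2pt (R : realType) (Y : finType) (f : Y -> R) (a b : Y) :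
  a != b -> (forall y, y != a -> y != b -> f y = 0) ->
  \sum_(y : Y) f y = f a + f b.
Proof.
move=> ab H; rewrite (bigD1 a) //= (bigD1 b) /=; last by rewrite eq_sym.
rewrite big1 ?addr0 ?addrA // => y /andP[ya yb]; exact: H.
Qed.

Section Help.
Variables (R : realType) (Y : finType) (ys y' : Y).
Hypothesis ne : ys != y'.

Definition pt (t : R) : Y -> R := fun y =>
  @dirac_pt R Y ys y + t * (@dirac_pt R Y y' y - @dirac_pt R Y ys y).

Lemma pt_ys t : pt t ys = 1 - t.
Proof. by rewrite /pt /dirac_pt eqxx (negbTE ne); lra. Qed.
Lemma pt_y' t : pt t y' = t.
Proof. by rewrite /pt /dirac_pt eqxx eq_sym (negbTE ne); lra. Qed.
Lemma pt_oth t y : y != ys -> y != y' -> pt t y = 0.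
Proof. by move=> h1 h2; rewrite /pt /dirac_pt (negbTE h1) (negbTE h2); lra. Qed.

Lemma dirac_oth y : y != ys -> @dirac_pt R Y ys y = 0 :> R.
Proof. by move=> h; rewrite /dirac_pt (negbTE h). Qed.

Lemma pt_feas (pref : Y -> R) t : 0 <= t <= 1 -> 0 < pref ys -> 0 < pref y' ->
  feasible pref (pt t).
Proof.
move=> /andP[t0 t1] p1 p2; split; [split|].
- move=> y; have [->|h1] := eqVneq y ys; first by rewrite pt_ys; lra.
  have [->|h2] := eqVneq y y'; first by rewrite pt_y'.
  by rewrite pt_oth.
- rewrite (sum2pt ne) ?pt_ys ?pt_y'; first lra.
  by move=> y; apply: pt_oth.
- move=> y; have [->|h1] := eqVneq y ys; first lra.
  have [->|h2] := eqVneq y y'; first lra.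
  by rewrite pt_oth.
Qed.

Lemma dirac_feas (pref : Y -> R) : 0 < pref ys -> feasible pref (@dirac_pt R Y ys).
Proof.
move=> p1; split; [split|].
- by move=> y; rewrite /dirac_pt; case: ifP.
- rewrite (sum2pt ne) /dirac_pt ?eqxx ?(negbTE ne) 1?eq_sym ?(negbTE ne) ?addr0 // => y h _.
  by rewrite (negbTE h).
- move=> y; have [->|h1] := eqVneq y ys; first lra.
  by rewrite dirac_oth.
Qed.

Lemma pairsum (f : Y -> R) (cs : Y -> Y -> R) :
  (forall y, y != ys -> y != y' -> f y = 0) ->
  \sum_(y : Y) \sum_(z : Y) f y * f z * cs y z =
  f ys * f ys * cs ys ys + f ys * f y' * cs ys y' +
  (f y' * f ys * cs y' ys + f y' * f y' * cs y' y').
Proof.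
move=> H; rewrite (sum2pt ne); last first.
  move=> y h1 h2; rewrite big1 // => z _; rewrite H //; lra.
by rewrite !(sum2pt ne) // => z h1 h2; rewrite (H z) //; lra.
Qed.

End Help.


Section J.
Variables (R : realType) (Y : finType) (ys y' : Y).
Hypothesis ne : ys != y'.
Variables (pref r : Y -> R) (d : nat) (psi : Y -> 'I_d -> R) (aKL adiv : R).
Hypothesis un : unit_norm psi.

Lemma cs_sym a b : cossim psi a b = cossim psi b a.
Proof. by apply: eq_bigr => i _; rewrite mulrC. Qed.
Lemma cs_diag a : cossim psi a a = 1.
Proof. by rewrite -(un a); apply: eq_bigr => i _; rewrite expr2. Qed.

Lemma J_pt t : 0 < t < 1 ->
  objJ pref r psi aKL adiv (pt ys y' t) =
  (1-t)*r ys + t*r y' - aKL*((1-t)*ln((1-t)/pref ys) + t*ln(t/pref y'))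
  - adiv/2*((1-t)*(1-t) + (1-t)*t*cossim psi ys y'
            + (t*(1-t)*cossim psi ys y' + t*t)).
Proof.
move=> /andP[t0 t1].
have oth := @pt_oth R Y ys y' t.
rewrite /objJ /KL (pairsum ne) // !(sum2pt ne); first last.
- by move=> y h1 h2; rewrite oth ?mul0r.
- by move=> y h1 h2; rewrite oth // eqxx.
rewrite !(pt_ys ne) !(pt_y' ne) !cs_diag (cs_sym y' ys).
have -> : (1 - t == 0) = false by apply/negbTE; rewrite subr_eq0; apply/eqP; lra.
have -> : (t == 0) = false by apply/negbTE; apply/eqP; lra.
by rewrite !mulr1.
Qed.

Lemma J_dirac :
  objJ pref r psi aKL adiv (@dirac_pt R Y ys) =
  r ys - aKL * ln (1 / pref ys) - adiv/2.
Proof.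
have oth := @dirac_oth R Y ys.
have oth2 : forall y, y != ys -> y != y' -> @dirac_pt R Y ys y = 0.
  by move=> y h _; apply: oth.
rewrite /objJ /KL (pairsum ne) // !(sum2pt ne); first last.
- by move=> y h1 h2; rewrite oth ?mul0r.
- by move=> y h1 h2; rewrite oth // eqxx.
rewrite /dirac_pt eqxx eq_sym (negbTE ne) eqxx cs_diag.
rewrite !(mul0r, mulr0, mul1r, mulr1, addr0).
by rewrite oner_eq0.
Qed.

End J.


Lemma J_diff (R : realType) (Y : finType) (ys y' : Y) (ne : ys != y')
  (pref r : Y -> R) (d : nat) (psi : Y -> 'I_d -> R) (aKL adiv : R)
  (un : unit_norm psi) (t : R) :
  0 < t < 1 -> 0 < pref ys -> 0 < pref y' ->
  objJ pref r psi aKL adiv (pt ys y' t) - objJ pref r psi aKL adiv (@dirac_pt R Y ys)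
  = t * (r y' - r ys)
    - aKL * ((1 - t) * ln (1 - t) + t * (ln (pref ys) - ln (pref y')) + t * ln t)
    + adiv * t * (1 - t) * (1 - cossim psi ys y').
Proof.
move=> tt p1 p2.
rewrite (J_pt ne pref r aKL adiv un tt) (J_dirac ne pref r aKL adiv un).
case/andP: tt => t0 t1.
have q1 : 0 < 1 - t by lra.
have ip1 : 0 < (pref ys)^-1 by rewrite invr_gt0.
have ip2 : 0 < (pref y')^-1 by rewrite invr_gt0.
rewrite !lnM ?posrE // !lnV ?posrE // ?mul1r ?lnV ?posrE //.
by rewrite ln1; field. Qed.

Lemma dirac_diff_le1 (R : realType) (Y : finType) (a b y : Y) :
  `|@dirac_pt R Y b y - @dirac_pt R Y a y| <= 1.
Proof.
rewrite /dirac_pt; case: (y == b); case: (y == a);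
  rewrite ?subrr ?subr0 ?sub0r ?normrN ?normr1 ?normr0 //.
Qed.

Theorem mainTheorem5 (R : realType) (Y : finType) (pref r : Y -> R)
  (d : nat) (psi : Y -> 'I_d -> R) (aKL adiv : R) (ystar y' : Y) :
  is_distr pref -> unit_norm psi -> 0 <= aKL -> 0 <= adiv ->
  ystar != y' -> 0 < pref ystar -> 0 < pref y' ->
  (0 < aKL ->
     ~ stationary (objJ pref r psi aKL adiv) (feasible pref) (@dirac_pt R Y ystar))
  /\
  (aKL = 0 ->
     r ystar - r y' < adiv * (1 - cossim psi ystar y') ->
     ~ local_max (objJ pref r psi aKL adiv) (feasible pref) (@dirac_pt R Y ystar)).
Proof.
move=> _ un aK0 ad0 ne p1 p2.
set c := cossim psi ystar y'.
have ne' : y' != ystar by rewrite eq_sym.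
split.
- move=> aKp [_ Hs].
  have [l [_ Hl]] := Hs _ (dirac_feas ne' p2).
  have [del [del0 Ht]] := Hl 1 ltr01.
  set K0 := (r y' - r ystar) - aKL * (ln (pref ystar) - ln (pref y')) - adiv * `|1 - c|.
  set M := (`|l| + 1 + `|K0|) / aKL.
  have aKM : aKL * M = `|l| + 1 + `|K0|.
    by rewrite /M mulrC -mulrA mulVf ?mulr1 // gt_eqF.
  set t := Num.min (del / 2) (Num.min (1 / 2) (expR (- M))).
  have t0 : 0 < t by rewrite !lt_min; apply/and3P; split; [lra|lra|apply: expR_gt0].
  have tdel : t < del by rewrite /t gt_min; apply/orP; left; lra.
  have t1 : t < 1.
    rewrite /t !gt_min; apply/orP; right; apply/orP; left; lra.
  have tM : t <= expR (- M) by rewrite /t !ge_min lexx !orbT.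
  have lnt : ln t <= - M.
    by rewrite -(expRK (- M)) ler_ln ?posrE ?expR_gt0.
  have Q := Ht t t0 tdel.
  have {}Q : `|(objJ pref r psi aKL adiv (pt ystar y' t)
            - objJ pref r psi aKL adiv (@dirac_pt R Y ystar)) / t - l| < 1 := Q.
  have tt : 0 < t < 1 by rewrite t0 t1.
  rewrite (J_diff ne r aKL adiv un tt p1 p2) -/c in Q.
  set D := (X in `|X / t - l|) in Q.
  have h1 : aKL * (1 - t) * ln (1 - t) <= 0.
    apply: mulr_ge0_le0; first by apply: mulr_ge0; lra.
    by apply: ln_le0; lra.
  have h2 : aKL * t * ln t <= aKL * t * (- M).
    by apply: ler_wpM2l => //; apply: mulr_ge0; lra.
  have nc : - `|1 - c| <= 1 - c.
    by rewrite lerNl -normrN ler_norm.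
  have nc0 : 0 <= `|1 - c| by [].
  have h3 : adiv * t * (- `|1 - c|) <= adiv * t * ((1 - t) * (1 - c)).
    apply: ler_wpM2l; first by apply: mulr_ge0; lra.
    nra.
  have hD : t * (K0 + aKL * M) <= D.
    rewrite /D /K0; nra.
  have hD2 : K0 + aKL * M <= D / t by rewrite ler_pdivlMr // mulrC.
  have hK : - `|K0| <= K0 by rewrite lerNl -normrN ler_norm.
  have hl : l <= `|l| by rewrite ler_norm.
  have hQ : D / t - l <= `|D / t - l| by rewrite ler_norm.
  lra.
- move=> aK gap [_ [eps [eps0 H]]].
  set A := adiv * (1 - c).
  set g := A - (r ystar - r y').
  have g0 : 0 < g by rewrite /g /A; lra.
  have A0 : 0 <= `|A| by [].
  have A1 : 0 < 2 * (`|A| + 1) by lra.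
  set t := Num.min (1 / 2) (Num.min (eps / 2) (g / (2 * (`|A| + 1)))).
  have t0 : 0 < t.
    rewrite !lt_min; apply/and3P; split; [lra|lra|].
    by apply: divr_gt0.
  have t1 : t < 1 by rewrite /t gt_min; apply/orP; left; lra.
  have teps : t < eps by rewrite /t !gt_min; apply/orP; right; apply/orP; left; lra.
  have tg : t <= g / (2 * (`|A| + 1)) by rewrite /t !ge_min lexx !orbT.
  have tg2 : t * (2 * (`|A| + 1)) <= g by rewrite -ler_pdivlMr.
  have tt : 0 < t < 1 by rewrite t0 t1.
  have t01 : 0 <= t <= 1 by apply/andP; split; lra.
  have F : feasible pref (pt ystar y' t) by apply: pt_feas.
  have HJ := H (pt ystar y' t) F.
  have HJ' : objJ pref r psi aKL adiv (pt ystar y' t)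
            - objJ pref r psi aKL adiv (@dirac_pt R Y ystar) <= 0.
    rewrite subr_le0; apply: HJ => y.
    have -> : pt ystar y' t y - @dirac_pt R Y ystar y =
      t * (@dirac_pt R Y y' y - @dirac_pt R Y ystar y) by rewrite /pt; lra.
    rewrite normrM (gtr0_norm t0).
    have := dirac_diff_le1 R ystar y' y.
    move=> h; apply: (le_lt_trans _ teps).
    by rewrite -[leRHS]mulr1; apply: ler_wpM2l => //; lra.
  rewrite (J_diff ne r aKL adiv un tt p1 p2) -/c aK in HJ'.
  have hA : A <= `|A| by rewrite ler_norm.
  have h4 : t * A <= t * `|A| by apply: ler_wpM2l => //; lra.
  have h5 : 0 < t * t by apply: mulr_gt0.
  move: HJ'; rewrite /g /A in g0 hA h4 tg2 *.
  nra.
Qed.
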